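(* For the $8$-pleated bowtie $B_8$, the umbral index satisfies $\mathfrak{u}(B_8)=1$; that is, the set of spectral rank 1 vertices of $B_8$ differs from the set of spectral rank 1 vertices of its clique-shadow $\partial^*B_8$.
   Context: For a connected $k$-uniform hypergraph $H=([n],E)$ and $x\in\mathbb{R}^n$, write $x^e=\prod_{v\in e}x_v$ and $F_H(x)=k\sum_{e\in E}x^e$. The principal eigenvector $y$ of $H$ is the unique strictly positive $y$ with $\|y\|_k=1$ and $\rho\, y_i^{k-1}=\sum_{e\ni i} y^{e\setminus\{i\}}$ for all $i$, where $\rho=\max_{\|z\|_k^k=1}F_H(z)$. The clique-shadow $\partial^*H$ is the multigraph on $[n]$ where $\{u,v\}$ has multiplicity $\mu(uv)=|\{e\in E:u,v\in e\}|$; its principal eigenvector is the positive Perron eigenvector of its adjacency matrix (entries $\mu(uv)$), normalized to unit $2$-norm. The spectral ranking of a (hyper)graph orders vertices by decreasing value of its principal eigenvector, tied vertices sharing a rank; spectral rank 1 vertices are those with maximal entry. The umbral index $\mathfrak{u}(H)$ is the least rank index at which the spectral rankings of $H$ and $\partial^*H$ differ (and $0$ if they coincide). The $t$-pleated bowtie $B_t$ is the $3$-uniform hypergraph on vertices $c,\ell_1,\dots,\ell_{t+2},r_1,\dots,r_{t+2}$ with edge set $\{\{c,r_1,r_2\}\}\cup\{\{c,\ell_1,\ell_j\}: 2\le j\le t+2\}\cup\{\{r_1,r_2,r_j\}: 3\le j\le t+2\}$. *)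

(* Defs.v *)
From HB Require Import structures.
From mathcomp Require Import all_boot all_order all_algebra.
From mathcomp Require Import reals.
Set Implicit Arguments. Unset Strict Implicit. Unset Printing Implicit Defensive.
Import Order.TTheory GRing.Theory Num.Theory.
Local Open Scope ring_scope.

Definition hF (R : realType) (n k : nat) (E : seq {set 'I_n}) (x : 'I_n -> R) : R :=
  k%:R * \sum_(e <- E) \prod_(v in e) x v.

Definition knorm_pow (R : realType) (n k : nat) (z : 'I_n -> R) : R :=
  \sum_(i < n) `|z i| ^+ k.

Definition hspectral_radius (R : realType) (n k : nat) (E : seq {set 'I_n}) (rho : R) : Prop :=
  (exists z : 'I_n -> R, knorm_pow k z = 1 /\ hF k E z = rho) /\
  (forall z : 'I_n -> R, knorm_pow k z = 1 -> hF k E z <= rho).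

Definition hprincipal (R : realType) (n k : nat) (E : seq {set 'I_n}) (y : 'I_n -> R) : Prop :=
  (forall i, 0 < y i) /\ knorm_pow k y = 1 /\
  exists rho : R, hspectral_radius k E rho /\
    forall i : 'I_n,
      rho * y i ^+ k.-1 = \sum_(e <- E | i \in e) \prod_(v in e :\ i) y v.

Definition shadow_adj (R : realType) (n : nat) (E : seq {set 'I_n}) (u v : 'I_n) : R :=
  if u == v then 0 else (count (fun e : {set 'I_n} => (u \in e) && (v \in e)) E)%:R.

Definition gprincipal (R : realType) (n : nat) (A : 'I_n -> 'I_n -> R) (x : 'I_n -> R) : Prop :=
  (forall i, 0 < x i) /\ \sum_(i < n) x i ^+ 2 = 1 /\
  exists lam : R,
    (forall u, \sum_(w < n) A u w * x w = lam * x u) /\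
    (forall (mu : R) (v : 'I_n -> R), (exists i, v i != 0) ->
        (forall u, \sum_(w < n) A u w * v w = mu * v u) -> `|mu| <= lam).

Definition rank1 (R : realType) (n : nat) (y : 'I_n -> R) : {set 'I_n} :=
  [set i | [forall j, y j <= y i]].

Section Bowtie.
Variable t : nat.
Local Notation N := (2 * t + 4).+1.
Definition bt_c : 'I_N := inord 0.
Definition bt_l (j : nat) : 'I_N := inord j.
Definition bt_r (j : nat) : 'I_N := inord (t + 2 + j).
Definition bowtie_edges : seq {set 'I_N} :=
  [set bt_c; bt_r 1; bt_r 2]
  :: [seq [set bt_c; bt_l 1; bt_l j] | j <- iota 2 t.+1]
  ++ [seq [set bt_r 1; bt_r 2; bt_r j] | j <- iota 3 t].
End Bowtie.

(* Main.v *)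
Require Import Defs.
From HB Require Import structures.
From mathcomp Require Import all_boot all_order all_algebra.
From mathcomp Require Import reals.
From mathcomp Require Import ring lra.
Import Order.TTheory GRing.Theory Num.Theory.
Set Implicit Arguments. Unset Strict Implicit.
Local Open Scope ring_scope.



Notation NN := (2 * 8 + 4).+1.

Definition T8 : seq (nat * nat * nat) :=
  (0, 11, 12)%N :: [seq (0, 1, j)%N | j <- iota 2 9] ++ [seq (11, 12, j)%N | j <- iota 13 8].

Definition mk3 (t : nat * nat * nat) : {set 'I_NN} :=
  [set inord t.1.1; inord t.1.2; inord t.2].

Lemma edgesE : bowtie_edges 8 = map mk3 T8.
Proof. reflexivity. Qed.

Definition ok3 (t : nat * nat * nat) : bool :=
  [&& t.1.1 < NN, t.1.2 < NN, t.2 < NN, t.1.1 != t.1.2, t.1.1 != t.2 & t.1.2 != t.2]%N.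

Lemma okT8 : all ok3 T8.
Proof. by []. Qed.

Lemma inord_eq (i j : nat) : (i < NN)%N -> (j < NN)%N -> ((inord i : 'I_NN) == inord j) = (i == j).
Proof. by move=> hi hj; rewrite -val_eqE /= !inordK. Qed.

Section Big.
Variable R : realType.

Definition cc (f : R -> R -> R) (F : 'I_NN -> R) (i : nat) (t : nat * nat * nat) : R :=
  let: (a, b, c) := t in
  if i == a then f (F (inord b)) (F (inord c))
  else if i == b then f (F (inord a)) (F (inord c))
  else if i == c then f (F (inord a)) (F (inord b)) else 0.


Lemma big2 (idx : R) (op : Monoid.com_law idx) (F : 'I_NN -> R) (b c : 'I_NN) :
  b != c -> \big[op/idx]_(v in [set b; c]) F v = op (F b) (F c).
Proof.
move=> bc; rewrite big_setU1 ?big_set1 // inE; exact: bc.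
Qed.

Arguments big2 {idx} op F {b c}.
Lemma sumE (idx : R) (op : Monoid.com_law idx) (F : 'I_NN -> R) (i : nat) : (i < NN)%N ->
  \sum_(e <- bowtie_edges 8 | inord i \in e) \big[op/idx]_(v in e :\ inord i) F v
  = \sum_(t <- T8) cc op F i t.
Proof.
move=> hi; rewrite edgesE big_map big_mkcond; apply: eq_big_seq => t tT.
have := allP okT8 t tT; case: t tT => [[a b] c] tT /=.
move=> /= /andP[ha /andP[hb /andP[hc /andP[ab /andP[ac bc]]]]].
rewrite /mk3 /= !inE !inord_eq //.
have nAB : (inord a : 'I_NN) != inord b by rewrite inord_eq.
have nAC : (inord a : 'I_NN) != inord c by rewrite inord_eq.
have nBC : (inord b : 'I_NN) != inord c by rewrite inord_eq.
have nBA := nAB; rewrite eq_sym in nBA.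
have nCA := nAC; rewrite eq_sym in nCA.
have nCB := nBC; rewrite eq_sym in nCB.
case: (eqVneq i a) => [->|ia] /=.
  rewrite -(big2 op F nBC); apply: eq_bigl => v; rewrite !inE.
  case: (eqVneq v (inord a)) => [->|va]; rewrite ?eqxx ?(negPf nAB) ?(negPf nAC) ?(negPf nBC) ?(negPf nBA) ?(negPf nCA) ?(negPf nCB) ?orbF //=.
case: (eqVneq i b) => [->|ib] /=.
  rewrite -(big2 op F nAC); apply: eq_bigl => v; rewrite !inE.
  case: (eqVneq v (inord b)) => [->|va]; rewrite ?eqxx ?(negPf nAB) ?(negPf nAC) ?(negPf nBC) ?(negPf nBA) ?(negPf nCA) ?(negPf nCB) ?orbF //=.
case: (eqVneq i c) => [->|ic] //=.
rewrite -(big2 op F nAB); apply: eq_bigl => v; rewrite !inE.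
case: (eqVneq v (inord c)) => [->|va]; rewrite ?eqxx ?(negPf nAB) ?(negPf nAC) ?(negPf nBC) ?(negPf nBA) ?(negPf nCA) ?(negPf nCB) ?orbF //=.
Qed.

Lemma gsumE (E : seq {set 'I_NN}) (x : 'I_NN -> R) (u : 'I_NN) :
  \sum_(w < NN) shadow_adj R E u w * x w =
  \sum_(e <- E | u \in e) \sum_(w in e :\ u) x w.
Proof.
elim: E => [|e E IH].
  rewrite big_nil; apply: big1 => w _; rewrite /shadow_adj /=; case: (u == w); by rewrite mul0r.
rewrite big_cons -IH.
have -> : \sum_(w < NN) shadow_adj R (e :: E) u w * x w =
  \sum_(w < NN) ((if u == w then 0 else ((u \in e) && (w \in e))%:R) * x w)
  + \sum_(w < NN) shadow_adj R E u w * x w.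
  rewrite -big_split; apply: eq_bigr => w _; rewrite /shadow_adj /=.
  case: (u == w); first by rewrite !mul0r addr0.
  by rewrite natrD mulrDl.
case: (boolP (u \in e)) => ue; last first.
  rewrite [X in X + _](_ : _ = 0) ?add0r //.
  apply: big1 => w _; case: (u == w); by rewrite ?mul0r // (negPf ue) mul0r.
congr (_ + _).
rewrite (big_mkcond (fun w => w \in e :\ u)); apply: eq_bigr => w _.
rewrite in_setD1 /=; case: ifP => [/eqP uw|/negbT uw]; first by rewrite uw eqxx mul0r.
rewrite eq_sym (negPf uw) /=; case: (w \in e); by rewrite ?mul1r ?mul0r.
Qed.

End Big.
Arguments cc {R}.


Section Alg.
Variable R : realType.

Lemma gr_alg (lam X L M P Q S : R) : 0 < X -> 0 < L -> 0 < M -> 0 < P -> 0 < Q -> 0 < S ->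
 lam * X = P + Q + 9 * L + M -> lam * L = 9 * X + M -> lam * M = 9 * X + 9 * L ->
 lam * P = X + 9 * Q + S -> lam * Q = X + 9 * P + S -> lam * S = 8 * P + 8 * Q -> P < X.
Proof.
move=> hX hL hM hP hQ hS e0 e1 e2 e3 e4 e5.
have hlam : 0 < lam by nra.
have PQ : P = Q by nra.
subst Q.
rewrite ltNge; apply/negP => XP.
have h1 : lam ^+ 2 <= 10 * lam + 16.
  have : lam ^+ 2 * P <= (10 * lam + 16) * P by nra.
  move=> H; nra.
have h2 : (lam ^+ 2 - 2 * lam - 9) * X >= (9 * lam + 9) * L by nra.
have h3 : (lam ^+ 2 - 9) * L = (9 * lam + 9) * X by nra.
have h4 : lam ^+ 2 - 9 > 0 by nra.
have h5 : (lam ^+ 2 - 2 * lam - 9) * (lam ^+ 2 - 9) >= 81 * (lam + 1) ^+ 2.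
  have H : (lam ^+ 2 - 2 * lam - 9) * X * (lam ^+ 2 - 9) >= (9 * lam + 9) * ((9 * lam + 9) * X).
    rewrite -h3; nra.
  have : ((lam ^+ 2 - 2 * lam - 9) * (lam ^+ 2 - 9) - 81 * (lam + 1) ^+ 2) * X >= 0.
    have -> : ((lam ^+ 2 - 2 * lam - 9) * (lam ^+ 2 - 9) - 81 * (lam + 1) ^+ 2) * X =
      (lam ^+ 2 - 2 * lam - 9) * X * (lam ^+ 2 - 9) - (9 * lam + 9) * ((9 * lam + 9) * X) by ring.
    lra.
  rewrite pmulr_lge0 //; lra.
have h6 : lam ^+ 3 - 2 * lam ^+ 2 <= 96 * lam + 128 by nra.
nra.
Qed.



Lemma lt_sq (x y : R) : 0 <= x -> x < y -> x ^+ 2 < y ^+ 2.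
Proof. move=> *; nra. Qed.
Lemma lt_cube (x y : R) : 0 <= x -> x < y -> x ^+ 3 < y ^+ 3.
Proof. move=> *; have : x ^+ 2 < y ^+ 2 by nra. rewrite !exprS expr0 !mulr1 => ?; nra. Qed.
Lemma sq_lt (x y : R) : 0 <= y -> x ^+ 2 < y ^+ 2 -> x < y.
Proof. move=> hy h; rewrite ltNge; apply/negP => yx; nra. Qed.

Lemma G_pos (u : R) : 0 < u -> u + 8 < u ^+ 3 -> (u + 8) ^+ 2 + 81 * u ^+ 2 < (u + 8) ^+ 2 * u ^+ 2.
Proof.
move=> hu h.
have hu0 : 2166 / 1000 <= u.
  rewrite leNgt; apply/negP => hlt.
  have H1 : 0 <= (2166 / 1000 - u) * (u ^+ 2 + 2166 / 1000 * u + (2166 / 1000) ^+ 2 - 1) by nra.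
  nra.
set e := u - 2166 / 1000.
have he : 0 <= e by rewrite /e; lra.
have -> : u = e + 2166 / 1000 by rewrite /e; ring.
have h2 : 0 <= e ^+ 2 by nra.
have h3 : 0 <= e ^+ 3 by rewrite exprS; nra.
have h4 : 0 <= e ^+ 4 by rewrite exprS; nra.
nra.
Qed.

Lemma pos_cube_inj (p q : R) : 0 < p -> 0 < q -> p ^+ 3 = q ^+ 3 -> p = q.
Proof.
move=> hp hq h.
have : (p - q) * (p ^+ 2 + p * q + q ^+ 2) = 0.
  have -> : (p - q) * (p ^+ 2 + p * q + q ^+ 2) = p ^+ 3 - q ^+ 3 by ring.
  by rewrite h subrr.
move/eqP; rewrite mulf_eq0 => /orP [|]; first by rewrite subr_eq0 => /eqP.
move/eqP => H; nra.
Qed.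

Lemma hyp_alg (rho a b d p q s : R) :
 0 < a -> 0 < b -> 0 < d -> 0 < p -> 0 < q -> 0 < s ->
 rho * a ^+ 2 = p * q + 9 * (b * d) ->
 rho * b ^+ 2 = 9 * (a * d) ->
 rho * d ^+ 2 = a * b ->
 rho * p ^+ 2 = a * q + 8 * (q * s) ->
 rho * q ^+ 2 = a * p + 8 * (p * s) ->
 rho * s ^+ 2 = p * q ->
 [/\ a <= p, b <= p, d <= p, q = p & s <= p].
Proof.
move=> ha hb hd hp hq hs e0 e1 e2 e3 e4 e5.
have hrho : 0 < rho by nra.
have pq : p = q.
  apply: pos_cube_inj => //.
  apply: (mulfI (lt0r_neq0 hrho)).
  have -> : rho * p ^+ 3 = (rho * p ^+ 2) * p by ring.
  have -> : rho * q ^+ 3 = (rho * q ^+ 2) * q by ring.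
  rewrite e3 e4; ring.
subst q.
have e3' : rho * p = a + 8 * s.
  apply: (mulIf (lt0r_neq0 hp)).
  have -> : rho * p * p = rho * p ^+ 2 by ring.
  rewrite e3; ring.
set u := a / s.
have hu : 0 < u by rewrite /u divr_gt0.
have au : a = u * s by rewrite /u divfK // lt0r_neq0.
have hr3 : rho ^+ 3 = (u + 8) ^+ 2.
  apply: (mulIf (lt0r_neq0 (exprn_gt0 2 hs))).
  have -> : rho ^+ 3 * s ^+ 2 = (rho * p) ^+ 2.
    have -> : rho ^+ 3 * s ^+ 2 = rho ^+ 2 * (rho * s ^+ 2) by ring.
    rewrite e5; ring.
  by rewrite e3' au; ring.
have K : rho ^+ 2 * (b * d) = 9 * a ^+ 2.
  apply: (mulIf (lt0r_neq0 (mulr_gt0 hb hd))).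
  have -> : rho ^+ 2 * (b * d) * (b * d) = (rho * b ^+ 2) * (rho * d ^+ 2) by ring.
  rewrite e1 e2; ring.
have Gu : (u + 8) ^+ 2 * u ^+ 2 = (u + 8) ^+ 2 + 81 * u ^+ 2.
  apply: (mulIf (lt0r_neq0 (exprn_gt0 2 hs))).
  have H : rho ^+ 3 * a ^+ 2 = (rho * p) ^+ 2 + 81 * a ^+ 2.
    have -> : rho ^+ 3 * a ^+ 2 = rho ^+ 2 * (rho * a ^+ 2) by ring.
    rewrite e0.
    have -> : (rho * p) ^+ 2 = rho * (rho * p ^+ 2) by ring.
    have -> : p ^+ 2 = p * p by ring.
    rewrite mulrDr [rho ^+ 2 * (9 * _)]mulrCA K; ring.
  rewrite hr3 e3' au in H.
  have -> : (u + 8) ^+ 2 * u ^+ 2 * s ^+ 2 = (u + 8) ^+ 2 * (u * s) ^+ 2 by ring.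
  rewrite H; ring.
have u1 : 1 < u by nra.
have ap : a <= p.
  rewrite leNgt; apply/negP => pa.
  have h1 : rho < u ^+ 2.
    have : rho * s ^+ 2 < u ^+ 2 * s ^+ 2.
      rewrite e5 -expr2.
      have -> : u ^+ 2 * s ^+ 2 = a ^+ 2 by rewrite au; ring.
      exact: lt_sq (ltW hp) pa.
    by rewrite ltr_pM2r // exprn_gt0.
  have h2 : rho ^+ 3 < (u ^+ 2) ^+ 3 by exact: lt_cube (ltW hrho) h1.
  rewrite hr3 -exprM (_ : (2 * 3 = 3 * 2)%N) // exprM in h2.
  have h3 : u + 8 < u ^+ 3 by apply: sq_lt => //; apply: exprn_ge0; exact: ltW.
  have := G_pos hu h3; lra.
have r81 : 81 < rho ^+ 3 by rewrite hr3; nra.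
have b3 : b ^+ 3 = 9 * d ^+ 3.
  apply: (mulfI (lt0r_neq0 hrho)).
  have -> : rho * b ^+ 3 = (rho * b ^+ 2) * b by ring.
  have -> : rho * (9 * d ^+ 3) = 9 * ((rho * d ^+ 2) * d) by ring.
  rewrite e1 e2; ring.
have ba : b <= a.
  rewrite leNgt; apply/negP => ab.
  have h1 : rho ^+ 2 * d < 9 * b.
    have : rho ^+ 2 * d * b < 9 * b * b.
      have -> : rho ^+ 2 * d * b = rho ^+ 2 * (b * d) by ring.
      rewrite K; nra.
    by rewrite ltr_pM2r.
  have h2 : (rho ^+ 2 * d) ^+ 3 < (9 * b) ^+ 3 by apply: lt_cube => //; apply: mulr_ge0; [apply: exprn_ge0; exact: ltW|exact: ltW].
  have h3 : (rho ^+ 3) ^+ 2 * d ^+ 3 < 6561 * d ^+ 3.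
    have -> : (rho ^+ 3) ^+ 2 * d ^+ 3 = (rho ^+ 2 * d) ^+ 3 by ring.
    have -> : 6561 * d ^+ 3 = (9 * b) ^+ 3 by rewrite exprMn b3; ring.
    exact: h2.
  have h4 : (rho ^+ 3) ^+ 2 < 6561 by rewrite -(ltr_pM2r (exprn_gt0 3 hd)).
  nra.
have db : d <= b.
  rewrite leNgt; apply/negP => bd.
  have : b ^+ 3 < d ^+ 3 by exact: lt_cube (ltW hb) bd.
  rewrite b3; have := exprn_gt0 3 hd; lra.
have sp : s <= p.
  have r1 : 1 < rho by nra.
  rewrite leNgt; apply/negP => ps.
  have : p ^+ 2 < s ^+ 2 by exact: lt_sq (ltW hp) ps.
  have := exprn_gt0 2 hs; nra.
split => //; lra.
Qed.

End Alg.
Lemma hyE (R : realType) (y : 'I_NN -> R) rho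
  (Hy : forall i : 'I_NN, rho * y i ^+ 3.-1 = \sum_(e <- bowtie_edges 8 | i \in e) \prod_(v in e :\ i) y v)
  k : (k < NN)%N -> rho * y (inord k) ^+ 2 = \sum_(t <- T8) cc *%R y k t.
Proof. move=> hk; rewrite (Hy (inord k)); exact: sumE. Qed.

Lemma gxE (R : realType) (x : 'I_NN -> R) lam
  (Hx : forall u : 'I_NN, \sum_(w < NN) shadow_adj R (bowtie_edges 8) u w * x w = lam * x u)
  k : (k < NN)%N -> lam * x (inord k) = \sum_(t <- T8) cc +%R x k t.
Proof. move=> hk; rewrite -Hx gsumE; exact: sumE. Qed.


Lemma sumT8 (R : realType) (F : nat * nat * nat -> R) : \sum_(t <- T8) F t = foldr (fun t acc => F t + acc) 0 T8.
Proof. by elim: T8 => [|t l IH]; rewrite ?big_nil ?big_cons ?IH. Qed.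

Lemma sq_eq (R : realType) (c rho u v : R) : 0 < c -> rho * u ^+ 2 = c -> rho * v ^+ 2 = c -> 0 < u -> 0 < v -> u = v.
Proof.
move=> hc hu hv pu pv.
have hr : rho != 0 by apply/eqP => r0; move: hu; rewrite r0 mul0r => c0; move: hc; rewrite -c0 ltxx.
have : u ^+ 2 = v ^+ 2 by apply: (mulfI hr); rewrite hu hv.
move=> H; apply/eqP; rewrite eq_le; apply/andP; split; rewrite leNgt; apply/negP => l; nra.
Qed.

Theorem theorem4p3 (R : realType) (y x : 'I_(2 * 8 + 4).+1 -> R) :
  hprincipal 3 (bowtie_edges 8) y ->
  gprincipal (shadow_adj R (bowtie_edges 8)) x ->
  rank1 y != rank1 x.
Proof.
move=> [ypos [_ [rho [_ Hy]]]] [xpos [_ [lam [Hx _]]]].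
have h0 := hyE Hy (isT : (0 < NN)%N).
have h1 := hyE Hy (isT : (1 < NN)%N).
have h2 := hyE Hy (isT : (2 < NN)%N).
have h3 := hyE Hy (isT : (3 < NN)%N).
have h4 := hyE Hy (isT : (4 < NN)%N).
have h5 := hyE Hy (isT : (5 < NN)%N).
have h6 := hyE Hy (isT : (6 < NN)%N).
have h7 := hyE Hy (isT : (7 < NN)%N).
have h8 := hyE Hy (isT : (8 < NN)%N).
have h9 := hyE Hy (isT : (9 < NN)%N).
have h10 := hyE Hy (isT : (10 < NN)%N).
have h11 := hyE Hy (isT : (11 < NN)%N).
have h12 := hyE Hy (isT : (12 < NN)%N).
have h13 := hyE Hy (isT : (13 < NN)%N).
have h14 := hyE Hy (isT : (14 < NN)%N).
have h15 := hyE Hy (isT : (15 < NN)%N).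
have h16 := hyE Hy (isT : (16 < NN)%N).
have h17 := hyE Hy (isT : (17 < NN)%N).
have h18 := hyE Hy (isT : (18 < NN)%N).
have h19 := hyE Hy (isT : (19 < NN)%N).
have h20 := hyE Hy (isT : (20 < NN)%N).
rewrite !sumT8 /T8 /cc /= ?addr0 ?add0r in h0 h1 h2 h3 h4 h5 h6 h7 h8 h9 h10 h11 h12 h13 h14 h15 h16 h17 h18 h19 h20.
have d3 : y (inord 3) = y (inord 2) := sq_eq (mulr_gt0 (ypos _) (ypos _)) h3 h2 (ypos _) (ypos _).
have d4 : y (inord 4) = y (inord 2) := sq_eq (mulr_gt0 (ypos _) (ypos _)) h4 h2 (ypos _) (ypos _).
have d5 : y (inord 5) = y (inord 2) := sq_eq (mulr_gt0 (ypos _) (ypos _)) h5 h2 (ypos _) (ypos _).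
have d6 : y (inord 6) = y (inord 2) := sq_eq (mulr_gt0 (ypos _) (ypos _)) h6 h2 (ypos _) (ypos _).
have d7 : y (inord 7) = y (inord 2) := sq_eq (mulr_gt0 (ypos _) (ypos _)) h7 h2 (ypos _) (ypos _).
have d8 : y (inord 8) = y (inord 2) := sq_eq (mulr_gt0 (ypos _) (ypos _)) h8 h2 (ypos _) (ypos _).
have d9 : y (inord 9) = y (inord 2) := sq_eq (mulr_gt0 (ypos _) (ypos _)) h9 h2 (ypos _) (ypos _).
have d10 : y (inord 10) = y (inord 2) := sq_eq (mulr_gt0 (ypos _) (ypos _)) h10 h2 (ypos _) (ypos _).
have d14 : y (inord 14) = y (inord 13) := sq_eq (mulr_gt0 (ypos _) (ypos _)) h14 h13 (ypos _) (ypos _).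
have d15 : y (inord 15) = y (inord 13) := sq_eq (mulr_gt0 (ypos _) (ypos _)) h15 h13 (ypos _) (ypos _).
have d16 : y (inord 16) = y (inord 13) := sq_eq (mulr_gt0 (ypos _) (ypos _)) h16 h13 (ypos _) (ypos _).
have d17 : y (inord 17) = y (inord 13) := sq_eq (mulr_gt0 (ypos _) (ypos _)) h17 h13 (ypos _) (ypos _).
have d18 : y (inord 18) = y (inord 13) := sq_eq (mulr_gt0 (ypos _) (ypos _)) h18 h13 (ypos _) (ypos _).
have d19 : y (inord 19) = y (inord 13) := sq_eq (mulr_gt0 (ypos _) (ypos _)) h19 h13 (ypos _) (ypos _).
have d20 : y (inord 20) = y (inord 13) := sq_eq (mulr_gt0 (ypos _) (ypos _)) h20 h13 (ypos _) (ypos _).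
rewrite ?d3 ?d4 ?d5 ?d6 ?d7 ?d8 ?d9 ?d10 ?d14 ?d15 ?d16 ?d17 ?d18 ?d19 ?d20 in h0 h1 h11 h12.
have E0 : rho * y (inord 0) ^+ 2 = y (inord 11) * y (inord 12) + 9 * (y (inord 1) * y (inord 2)) by rewrite h0; ring.
have E1 : rho * y (inord 1) ^+ 2 = 9 * (y (inord 0) * y (inord 2)) by rewrite h1; ring.
have E11 : rho * y (inord 11) ^+ 2 = y (inord 0) * y (inord 12) + 8 * (y (inord 12) * y (inord 13)) by rewrite h11; ring.
have E12 : rho * y (inord 12) ^+ 2 = y (inord 0) * y (inord 11) + 8 * (y (inord 11) * y (inord 13)) by rewrite h12; ring.
have [ap bp dp qp sp] := hyp_alg (ypos _) (ypos _) (ypos _) (ypos _) (ypos _) (ypos _) E0 E1 h2 E11 E12 h13.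
have Hall : forall k, (k < NN)%N -> y (inord k) <= y (inord 11).
  move=> k; do 21 (case: k => [_|k]; first by rewrite ?d3 ?d4 ?d5 ?d6 ?d7 ?d8 ?d9 ?d10 ?d14 ?d15 ?d16 ?d17 ?d18 ?d19 ?d20; lra).
  by [].
have inY : (inord 11 : 'I_NN) \in rank1 y.
  rewrite inE; apply/forallP => j; rewrite -(inord_val j); exact: Hall.
have g0 := gxE Hx (isT : (0 < NN)%N).
have g1 := gxE Hx (isT : (1 < NN)%N).
have g2 := gxE Hx (isT : (2 < NN)%N).
have g3 := gxE Hx (isT : (3 < NN)%N).
have g4 := gxE Hx (isT : (4 < NN)%N).
have g5 := gxE Hx (isT : (5 < NN)%N).
have g6 := gxE Hx (isT : (6 < NN)%N).
have g7 := gxE Hx (isT : (7 < NN)%N).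
have g8 := gxE Hx (isT : (8 < NN)%N).
have g9 := gxE Hx (isT : (9 < NN)%N).
have g10 := gxE Hx (isT : (10 < NN)%N).
have g11 := gxE Hx (isT : (11 < NN)%N).
have g12 := gxE Hx (isT : (12 < NN)%N).
have g13 := gxE Hx (isT : (13 < NN)%N).
have g14 := gxE Hx (isT : (14 < NN)%N).
have g15 := gxE Hx (isT : (15 < NN)%N).
have g16 := gxE Hx (isT : (16 < NN)%N).
have g17 := gxE Hx (isT : (17 < NN)%N).
have g18 := gxE Hx (isT : (18 < NN)%N).
have g19 := gxE Hx (isT : (19 < NN)%N).
have g20 := gxE Hx (isT : (20 < NN)%N).
rewrite !sumT8 /T8 /cc /= ?addr0 ?add0r in g0 g1 g2 g3 g4 g5 g6 g7 g8 g9 g10 g11 g12 g13 g14 g15 g16 g17 g18 g19 g20.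
have PX : x (inord 11) < x (inord 0).
  apply: (@gr_alg R lam (x (inord 0)) (x (inord 1)) (x (inord 2) + x (inord 3) + x (inord 4) + x (inord 5) + x (inord 6) + x (inord 7) + x (inord 8) + x (inord 9) + x (inord 10)) (x (inord 11)) (x (inord 12)) (x (inord 13) + x (inord 14) + x (inord 15) + x (inord 16) + x (inord 17) + x (inord 18) + x (inord 19) + x (inord 20))) => //.
  - by rewrite !addr_gt0.
  - by rewrite !addr_gt0.
  - by rewrite g0; ring.
  - by rewrite g1; ring.
  - by rewrite !mulrDr g2 g3 g4 g5 g6 g7 g8 g9 g10; ring.
  - by rewrite g11; ring.
  - by rewrite g12; ring.
  - by rewrite !mulrDr g13 g14 g15 g16 g17 g18 g19 g20; ring.
have notX : (inord 11 : 'I_NN) \notin rank1 x.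
  rewrite inE negb_forall; apply/existsP; exists (inord 0); by rewrite -ltNge.
apply/negP => /eqP E; move: notX; by rewrite -E inY.
Qed.
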